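(* Let $n\ge 2$, let $A\in\mathrm{Mat}_{n\times n}(\mathbb{R})$, and let $X_A$ be the replicator vector field with payoff matrix $A$. Suppose $q=(q_1,\dots,q_n)\in\mathbb{R}^n$ is a formal equilibrium of $X_A$. Let $B=-EAE^t$, let $\eta_q:\mathbb{R}^{n-1}\to\mathbb{R}^{n-1}$ be given by $\eta_q(u)_i=q_i-\frac{e^{u_i}}{1+\sum_{j=1}^{n-1}e^{u_j}}$, and let $\tilde X_B(u)=B\,\eta_q(u)$ on $\mathbb{R}^{n-1}$. Suppose there exists a matrix $D=(d_{ij})\in\mathrm{Mat}_{(n-1)\times(n-1)}(\mathbb{R})$ such that (1) $DB$ is anti-symmetric, and (2) the 1-form $\big(1+\sum_{i=1}^{n-1}e^{u_i}\big)D^t\eta_q(u)$ on $\mathbb{R}^{n-1}$ is closed, i.e. the matrix $D^tQ_1$ is diagonal, where $Q_1$ is the $(n-1)\times(n-1)$ matrix with entries $(Q_1)_{ij}=q_i-\delta_{ij}$. Then the function $$H_D(u)=\sum_{i=1}^{n-1}\Big(\sum_{k=1}^{n-1}d_{ki}q_k\Big)u_i+\sum_{i=1}^{n-1}\Big(\Big(\sum_{k=1}^{n-1}d_{ki}q_k\Big)-d_{ii}\Big)e^{u_i}$$ is a constant of motion of $\tilde X_B$ on $\mathbb{R}^{n-1}$, and consequently the function $$H_D\circ\phi^{-1}(x)=\sum_{i=1}^{n-1}\Big(\sum_{k=1}^{n-1}d_{ki}q_k\Big)\log\Big(\frac{x_i}{x_n}\Big)+\sum_{i=1}^{n-1}\Big(\Big(\sum_{k=1}^{n-1}d_{ki}q_k\Big)-d_{ii}\Big)\frac{x_i}{x_n}$$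 is a constant of motion of $X_A$ on the interior of the simplex $\Delta^{n-1}$.
   Context: $\Delta^{n-1}=\{x\in\mathbb{R}^n: x_i\ge 0,\ \sum_i x_i=1\}$. The replicator vector field with payoff matrix $A$ is $X_A(x)_i=x_i\big((Ax)_i-x^tAx\big)$, $1\le i\le n$, on $\Delta^{n-1}$. A formal equilibrium of $X_A$ is a point $q\in\mathbb{R}^n$ with $\sum_{i=1}^n q_i=1$ and $(Aq)_i=(Aq)_j$ for all $i,j$. $E$ is the $(n-1)\times n$ matrix $E=[-I_{n-1}\mid \mathbb{1}]$ (row $i$ has $-1$ in column $i$, $1$ in column $n$, zeros elsewhere). $\phi:\mathbb{R}^{n-1}\to(\Delta^{n-1})^\circ$ is the diffeomorphism $\phi(u)=\big(\frac{e^{u_1}}{1+\sum_j e^{u_j}},\dots,\frac{e^{u_{n-1}}}{1+\sum_j e^{u_j}},\frac{1}{1+\sum_j e^{u_j}}\big)$, with inverse $\phi^{-1}(x)=(\log(x_1/x_n),\dots,\log(x_{n-1}/x_n))$; $\tilde X_B$ is the pullback of $X_A|_{(\Delta^{n-1})^\circ}$ by $\phi$. A constant of motion of a vector field is a function constant along its integral curves. *)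

(* Defs.v *)
From HB Require Import structures.
From mathcomp Require Import all_boot all_order all_algebra.
From mathcomp Require Import all_classical all_reals all_analysis.
Set Implicit Arguments. Unset Strict Implicit. Unset Printing Implicit Defensive.
Import Order.TTheory GRing.Theory Num.Theory.
Import numFieldNormedType.Exports.
Local Open Scope classical_set_scope.
Local Open Scope ring_scope.

Section Defs.
Variable R : realType.

(* Throughout, the ambient dimension is n = m.+1 (so n >= 2 iff 1 <= m), and
   R^n vectors are column vectors 'cV[R]_(m.+1); R^(n-1) is 'cV[R]_m.
   The coordinate x_n is x ord_max, and x_i (i < n-1) is x (widen i). *)

Definition widen {m : nat} (i : 'I_m) : 'I_m.+1 := widen_ord (leqnSn m) i.

Definition Emx (m : nat) : 'M[R]_(m, m.+1) := 
  \matrix_(i, j) (if j == ord_max then 1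
                  else if j == widen i then -1 else 0).

Definition replicator {n : nat} (A : 'M[R]_n) (x : 'cV[R]_n) : 'cV[R]_n :=
  \col_i (x i 0 * ((A *m x) i 0 - (x^T *m A *m x) 0 0)).

Definition formal_equilibrium {n : nat} (A : 'M[R]_n) (q : 'cV[R]_n) : Prop :=
  \sum_i q i 0 = 1 /\ forall i j, (A *m q) i 0 = (A *m q) j 0.

Definition eta_q {m : nat} (q : 'cV[R]_m.+1) (u : 'cV[R]_m) : 'cV[R]_m :=
  \col_i (q (widen i) 0 - expR (u i 0) / (1 + \sum_j expR (u j 0))).

Definition Q1 {m : nat} (q : 'cV[R]_m.+1) : 'M[R]_m :=
  \matrix_(i, j) (q (widen i) 0 - (i == j)%:R).

Definition simplex_interior (n : nat) : set 'cV[R]_n :=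
  [set x | (forall i, 0 < x i 0) /\ \sum_i x i 0 = 1].

Definition integral_curve {k : nat} (X : 'cV[R]_k -> 'cV[R]_k) (I : set R)
  (g : R -> 'cV[R]_k) : Prop :=
  forall t, I t -> forall i, is_derive t 1 (fun s => g s i 0) (X (g t) i 0).

Definition constant_of_motion {k : nat} (X : 'cV[R]_k -> 'cV[R]_k)
  (U : set 'cV[R]_k) (H : 'cV[R]_k -> R) : Prop :=
  forall (I : set R) (g : R -> 'cV[R]_k),
    open I -> is_interval I -> (forall t, I t -> U (g t)) ->
    integral_curve X I g ->
    forall s t, I s -> I t -> H (g s) = H (g t).

End Defs.

(* Main.v *)
Require Import Defs.
From HB Require Import structures.
From mathcomp Require Import all_boot all_order all_algebra.
From mathcomp Require Import all_classical all_reals all_analysis.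
From mathcomp Require Import ring lra.
Import Order.TTheory GRing.Theory Num.Theory.
Import numFieldNormedType.Exports.
Local Open Scope classical_set_scope.
Local Open Scope ring_scope.

Lemma is_derive_sumf (R : realType) n (h : 'I_n -> R -> R) (dh : 'I_n -> R) (t : R) :
  (forall i, is_derive t 1 (h i) (dh i)) ->
  is_derive t 1 (fun s => \sum_(i < n) h i s) (\sum_(i < n) dh i).
Proof.
move=> H.
have -> : (fun s => \sum_(i < n) h i s) = \sum_(i < n) h i by rewrite fct_sumE.
exact: is_derive_sum.
Qed.

Lemma is_derive_scal (R : realType) (c : R) (f : R -> R) (df t : R) :
  is_derive t 1 f df -> is_derive t 1 (fun s => c * f s) (c * df).
Proof. move=> H; exact: (is_deriveZ c H). Qed.

Lemma is_derive_expc (R : realType) (f : R -> R) (df t : R) :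
  is_derive t 1 f df -> is_derive t 1 (fun s => expR (f s)) (expR (f t) * df).
Proof. move=> H; exact: (is_derive1_comp (f := expR) (is_derive_expR (f t)) H). Qed.

Lemma is_derive_div (R : realType) (f g : R -> R) df dg (t : R) :
  g t != 0 -> is_derive t 1 f df -> is_derive t 1 g dg ->
  is_derive t 1 (fun s => f s / g s) (f t * (- (g t) ^- 2 * dg) + (g t)^-1 * df).
Proof.
move=> gt hf hg; have hV := is_deriveV gt hg.
exact: (is_deriveM hf hV).
Qed.

Lemma is_derive_lnc (R : realType) (f : R -> R) (df t : R) :
  0 < f t -> is_derive t 1 f df -> is_derive t 1 (fun s => ln (f s)) ((f t)^-1 * df).
Proof. move=> p H; have := is_derive1_comp (@is_derive1_ln _ (f t) p) H. move=> X. exact: X. Qed.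
Lemma cst_on_interval (R : realType) (I : set R) (f : R -> R) :
  is_interval I -> (forall t, I t -> is_derive t 1 f 0) ->
  forall s t, I s -> I t -> f s = f t.
Proof.
move=> iI df.
suff H : forall s t, I s -> I t -> s <= t -> f s = f t.
  move=> s t Is It; case: (leP s t) => st; first exact: H.
  by apply/esym/H => //; apply: ltW.
move=> s t Is It st.
have sub : forall z, z \in `[s, t]%R -> I z.
  by move=> z; rewrite in_itv /= => /andP[a b]; apply: (iI s t) => //; rewrite a b.
have H1 : forall x, x \in `]s, t[%R -> is_derive x 1 f ((fun _ : R => 0 : R) x).
  move=> x; rewrite in_itv /= => /andP[a b]; apply: df; apply: sub.
  by rewrite in_itv /= !ltW.
have H2 : {within `[s, t], continuous f}.
  apply: continuous_in_subspaceT => x xin.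
  have xin2 : x \in `[s, t]%R by move: xin; rewrite in_setE.
  have := df x (sub x xin2) => -[dv _].
  exact/differentiable_continuous/derivable1_diffP.
have [c _] := MVT_segment st H1 H2.
by rewrite mul0r => /eqP; rewrite subr_eq0 => /eqP.
Qed.

Lemma antisym_quad (R : realType) m (M : 'M[R]_m) (v : 'cV[R]_m) :
  M^T = - M -> (v^T *m M *m v) 0 0 = 0.
Proof.
move=> hM.
set x := (v^T *m M *m v) 0 0.
have h : (v^T *m M *m v)^T 0 0 = x by rewrite mxE.
have : x = - x.
  by rewrite -[in LHS]h !trmx_mul trmxK hM mulNmx mulmxN mulmxA mxE /x.
lra.
Qed.

Lemma diag_off (R : realType) m (q : 'cV[R]_m.+1) (D : 'M[R]_m) :
  is_diag_mx (D^T *m Q1 q) ->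
  forall i k, k != i -> D k i = \sum_(j < m) D j i * q (widen j) 0.
Proof.
move=> /is_diag_mxP hd i k ki.
have := hd i k; rewrite eq_sym ki => /(_ isT).
rewrite mxE.
under eq_bigr => j _ do rewrite !mxE mulrBr.
rewrite sumrB [X in _ - X](bigD1 k) //= [X in _ - (_ + X)]big1; last first.
  by move=> j jk; rewrite (negPf jk) mulr0.
by rewrite eqxx mulr1 addr0 => /eqP; rewrite subr_eq0 => /eqP <-.
Qed.

Lemma part1_alg (R : realType) m (q : 'cV[R]_m.+1) (D B : 'M[R]_m) (u : 'cV[R]_m) :
  (D *m B)^T = - (D *m B) -> is_diag_mx (D^T *m Q1 q) ->
  let c : 'I_m -> R := fun i => \sum_(k < m) D k i * q (widen k) 0 in
  \sum_(i < m) c i * (B *m eta_q q u) i 0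
  + \sum_(i < m) (c i - D i i) * (expR (u i 0) * (B *m eta_q q u) i 0) = 0.
Proof.
move=> hDB hdiag c.
set e := fun k => expR (u k 0).
set S := 1 + \sum_k e k.
have Spos : 0 < S.
  rewrite /S ltr_pwDl // sumr_ge0 // => k _; exact/ltW/expR_gt0.
have SNZ : S != 0 by rewrite gt_eqF.
have stepB : forall i, \sum_k D k i * e k = D i i * e i + c i * (\sum_k e k - e i).
  move=> i; rewrite (bigD1 i) //= [in RHS](bigD1 i) //= addrAC subrr add0r.
  congr (_ + _); rewrite big_distrr /=; apply: eq_bigr => k ki.
  by rewrite (@diag_off _ _ _ _ hdiag _ _ ki).
have stepC : forall i, c i + (c i - D i i) * e i = S * (D^T *m eta_q q u) i 0.
  move=> i; rewrite mxE.
  under eq_bigr => k _ do rewrite !mxE mulrBr.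
  rewrite sumrB.
  have -> : \sum_k D k i * (expR (u k 0) / (1 + \sum_j expR (u j 0)))
            = (\sum_k D k i * e k) / S.
    by rewrite big_distrl /=; apply: eq_bigr => k _; rewrite mulrA.
  rewrite stepB -/(c i) /S.
  field.
  by rewrite -/S.
rewrite -big_split /=.
under eq_bigr => i _ do rewrite mulrA -mulrDl stepC -mulrA.
rewrite -big_distrr /=.
have -> : \sum_i (D^T *m eta_q q u) i 0 * (B *m eta_q q u) i 0
   = ((eta_q q u)^T *m (D *m B) *m (eta_q q u)) 0 0.
  have -> : (eta_q q u)^T *m (D *m B) *m eta_q q u
     = (D^T *m eta_q q u)^T *m (B *m eta_q q u).
    by rewrite trmx_mul trmxK !mulmxA.
  rewrite mxE.
  by apply: eq_bigr => i _; rewrite [in RHS]mxE.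
by rewrite antisym_quad // mulr0.
Qed.

Lemma widen_neq_max m (i : 'I_m) : (widen i == ord_max) = false.
Proof. by apply/negbTE; rewrite -val_eqE /= neq_ltn ltn_ord. Qed.

Lemma widen_inj m (i j : 'I_m) : (widen i == widen j) = (i == j).
Proof. by rewrite -!val_eqE. Qed.

Lemma E_mul (R : realType) m (v : 'cV[R]_m.+1) i :
  (Emx R m *m v) i 0 = v ord_max 0 - v (widen i) 0.
Proof.
rewrite mxE big_ord_recr /= !mxE eqxx mul1r addrC; congr (_ + _).
rewrite (bigD1 i) //= big1; last first.
  by move=> j ji; rewrite !mxE widen_neq_max widen_inj (negPf ji) mul0r.
by rewrite !mxE widen_neq_max eqxx addr0 mulN1r.
Qed.

Lemma ET_mul (R : realType) m (v : 'cV[R]_m.+1) :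
  \sum_j v j 0 = 0 ->
  (Emx R m)^T *m (\col_i (- v (widen i) 0)) = v.
Proof.
move=> hs; apply/matrixP => j k; rewrite ord1 !mxE.
have [->|jn] := eqVneq j ord_max.
  under eq_bigr => i _ do rewrite !mxE eqxx mul1r.
  move: hs; rewrite big_ord_recr /= sumrN => /eqP; rewrite addrC addr_eq0 => /eqP ->.
  by [].
have jm : (j < m)%N.
  have := ltn_ord j; rewrite ltnS leq_eqVlt => /orP[/eqP hj|//].
  by move: jn; rewrite -val_eqE /= hj eqxx.
set j' := Ordinal jm.
have -> : j = widen j' by apply: val_inj.
rewrite (bigD1 j') //= big1; last first.
  by move=> i ij; rewrite !mxE widen_neq_max widen_inj eq_sym (negPf ij) mul0r.
by rewrite !mxE widen_neq_max eqxx addr0 mulN1r opprK.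
Qed.

Lemma expR_ln_pos (R : realType) (r : R) : 0 < r -> expR (ln r) = r.
Proof. by move=> r0; apply/eqP; rewrite lnK_eq. Qed.

Lemma core2 (R : realType) m (A : 'M[R]_m.+1) (q x : 'cV[R]_m.+1) :
  formal_equilibrium A q -> simplex_interior x ->
  forall i, (- (Emx R m *m A *m (Emx R m)^T) *m
     eta_q q (\col_i ln (x (widen i) 0 / x ord_max 0))) i 0
   = (A *m x) (widen i) 0 - (A *m x) ord_max 0.
Proof.
move=> [hq1 heq] [xpos xs1] i.
set u := \col_i _.
have xn0 : x ord_max 0 != 0 by rewrite gt_eqF.
have hexp : forall j, expR (u j 0) = x (widen j) 0 / x ord_max 0.
  by move=> j; rewrite mxE expR_ln_pos // divr_gt0.
have hS : (1 + \sum_j expR (u j 0)) * x ord_max 0 = 1.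
  under eq_bigr => j _ do rewrite hexp.
  rewrite mulrDl mul1r big_distrl /=.
  under eq_bigr => j _ do rewrite divfK //.
  by move: xs1; rewrite big_ord_recr /= addrC.
have heta : eta_q q u = \col_i (- (x - q) (widen i) 0).
  apply/matrixP => j k; rewrite ord1 /eta_q [LHS]mxE [RHS]mxE hexp.
  have -> : x (widen j) 0 / x ord_max 0 / (1 + \sum_j expR (u j 0)) = x (widen j) 0.
    by rewrite -mulrA -invfM mulrC [_ * (1 + _)]mulrC hS invr1 mul1r.
  by rewrite !mxE opprB.
have hsum : \sum_j (x - q) j 0 = 0.
  under eq_bigr => j _ do rewrite !mxE.
  by rewrite sumrB xs1 hq1 subrr.
have h2 := heq (widen i) ord_max; rewrite !mxE in h2.
rewrite heta mulNmx -!mulmxA ET_mul // mxE E_mul mulmxBr !mxE h2.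
ring.
Qed.

Lemma cst_comp (R : realType) (T : Type) (I : set R) (H : T -> R) (g : R -> T) :
  is_interval I -> (forall t, I t -> is_derive t 1 (fun s => H (g s)) 0) ->
  forall s t, I s -> I t -> H (g s) = H (g t).
Proof. move=> iI hd s t Is It; exact: ((@cst_on_interval R I (fun s => H (g s))) iI hd). Qed.

Lemma part1 (R : realType) m (q : 'cV[R]_m.+1) (D B : 'M[R]_m) :
  (D *m B)^T = - (D *m B) -> is_diag_mx (D^T *m Q1 q) ->
  constant_of_motion (fun u : 'cV[R]_m => B *m eta_q q u) setT
    (fun u => \sum_(i < m) (\sum_(k < m) D k i * q (widen k) 0) * u i 0
              + \sum_(i < m) ((\sum_(k < m) D k i * q (widen k) 0) - D i i) * expR (u i 0)).
Proof.
move=> hDB hdiag; set H := (X in constant_of_motion _ _ X).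
move=> I g oI iI _ ic s t Is It.
apply: (@cst_comp _ _ I H g iI) => // t0 It0; rewrite /H.
have hd := ic t0 It0.
apply: is_derive_eq; last exact: (@part1_alg _ _ q D B (g t0) hDB hdiag).
apply: is_deriveD.
  apply: is_derive_sumf => i; exact: is_derive_scal.
apply: is_derive_sumf => i; apply: is_derive_scal; exact: is_derive_expc.
Qed.

Lemma part2_curve (R : realType) m (A : 'M[R]_m.+1) (q : 'cV[R]_m.+1) (I : set R)
  (g : R -> 'cV[R]_m.+1) :
  formal_equilibrium A q ->
  (forall t, I t -> simplex_interior (g t)) ->
  integral_curve (replicator A) I g ->
  integral_curve (fun u : 'cV[R]_m => - (Emx R m *m A *m (Emx R m)^T) *m eta_q q u) I
    (fun t => \col_i ln (g t (widen i) 0 / g t ord_max 0)).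
Proof.
move=> heq inU ic t It i.
have [xpos xs1] := inU t It.
rewrite core2 //.
have -> : (fun s => (\col_i ln (g s (widen i) 0 / g s ord_max 0)) i 0)
        = (fun s => ln (g s (widen i) 0 / g s ord_max 0)).
  by apply/funext => s; rewrite mxE.
have bn0 : g t ord_max 0 != 0 by rewrite gt_eqF.
have an0 : g t (widen i) 0 != 0 by rewrite gt_eqF.
apply: is_derive_eq.
  apply: is_derive_lnc; first by rewrite divr_gt0.
  apply: is_derive_div => //; exact: ic.
rewrite !mxE.
field.
by rewrite an0 bn0.
Qed.

Theorem theorem3p1 (R : realType) (m : nat) (hm : (1 <= m)%N)
  (A : 'M[R]_m.+1) (q : 'cV[R]_m.+1) (D : 'M[R]_m) :
  formal_equilibrium A q ->
  let B : 'M[R]_m := - (Emx R m *m A *m (Emx R m)^T) in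
  (D *m B)^T = - (D *m B) ->
  is_diag_mx (D^T *m Q1 q) ->
  let c : 'I_m -> R := fun i => \sum_(k < m) D k i * q (widen k) 0 in
  constant_of_motion (fun u : 'cV[R]_m => B *m eta_q q u) setT
    (fun u => \sum_(i < m) c i * u i 0
              + \sum_(i < m) (c i - D i i) * expR (u i 0))
  /\
  constant_of_motion (replicator A) (@simplex_interior R m.+1)
    (fun x => \sum_(i < m) c i * ln (x (widen i) 0 / x ord_max 0)
              + \sum_(i < m) (c i - D i i) * (x (widen i) 0 / x ord_max 0)).
Proof.
move=> heq B hDB hdiag c.
have P1 := @part1 R m q D B hDB hdiag.
split; first exact: P1.
move=> I g oI iI inU ic s t Is It.
have icu := @part2_curve R m A q I g heq inU ic.
have := P1 I _ oI iI (fun _ _ => Logic.I) icu s t Is It.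
have conv : forall t, I t ->
  \sum_(i < m) c i * ln (g t (widen i) 0 / g t ord_max 0)
  + \sum_(i < m) (c i - D i i) * (g t (widen i) 0 / g t ord_max 0)
  = \sum_(i < m) c i * (\col_i ln (g t (widen i) 0 / g t ord_max 0)) i 0
  + \sum_(i < m) (c i - D i i) * expR ((\col_i ln (g t (widen i) 0 / g t ord_max 0)) i 0).
  move=> t0 It0; have [xpos _] := inU t0 It0.
  congr (_ + _); apply: eq_bigr => i _; rewrite mxE //.
  by rewrite expR_ln_pos // divr_gt0.
by rewrite /= (conv s Is) (conv t It).
Qed.
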